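(* Let $q\ge2$ be a prime power, $d\ge6$ and $5\le j\le d$. Then $|Q_j(d-4)|>|Q_j(d-3)|$.
   Context: Let $b=-q$. For integers $m\ge0$ and $l$, ${m\brack l}_b=\prod_{t=1}^{l}\frac{b^{m-t+1}-1}{b^t-1}$ for $l\ge0$ and $0$ for $l<0$. For $0\le i,j\le d$, $$Q_j(i)=\sum_{h=0}^{\min\{j,d-i\}}(-1)^j(-q)^{\binom{j-h}{2}+hd}{d-h\brack d-j}_b{d-i\brack h}_b,$$ the eigenvalues of the Hermitian forms graph $Q_q(d,j)$. *)

(* Defs.v *)
From mathcomp Require Import all_boot all_order all_algebra.
Set Implicit Arguments. Unset Strict Implicit. Unset Printing Implicit Defensive.
Import Order.TTheory GRing.Theory Num.Theory.
Local Open Scope ring_scope.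

(* For t > m+1 the exponent is truncated, but then the factor t = m+1
   (b^0 - 1 = 0) already makes the product 0, as in the paper. *)
Definition gbin (b : rat) (m l : nat) : rat :=
  \prod_(1 <= t < l.+1) ((b ^+ (m.+1 - t)%N - 1) / (b ^+ t - 1)).

(* Q_j(i) for the Hermitian forms graph, with b = -q. *)
Definition Qeig (q d j i : nat) : rat :=
  let b : rat := - (q%:R) in
  \sum_(0 <= h < (minn j (d - i)).+1)
    (-1) ^+ j * b ^+ ('C(j - h, 2) + h * d)%N
      * gbin b (d - h) (d - j) * gbin b (d - i) h.

(* Main.v *)
Require Import Defs.
Set Warnings "-notation-overridden,-ambiguous-paths".
From mathcomp Require Import all_boot all_order all_algebra.
From mathcomp Require Import ring lra zify.
Import Order.TTheory GRing.Theory Num.Theory.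
Local Open Scope ring_scope.

Lemma sum4 (F : nat -> rat) : \sum_(0 <= h < 4) F h = F 0%N + (F 1%N + (F 2%N + F 3%N)).
Proof. by rewrite unlock /= addr0. Qed.
Lemma sum5 (F : nat -> rat) : \sum_(0 <= h < 5) F h = F 0%N + (F 1%N + (F 2%N + (F 3%N + F 4%N))).
Proof. by rewrite unlock /= addr0. Qed.

Lemma pow_ge (Q : rat) m n : 2 <= Q -> (m <= n)%N -> 2 ^+ m <= Q ^+ n.
Proof.
move=> hQ hmn; apply: (le_trans (ler_weXn2l _ hmn)) => //.
by apply: lerXn2r => //; rewrite nnegrE //; lra.
Qed.

Lemma normbX (Q : rat) n : 0 <= Q -> `|(- Q) ^+ n| = Q ^+ n.
Proof. by move=> h; rewrite normrX normrN ger0_norm. Qed.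

Lemma bX_neq1 (Q : rat) n : 2 <= Q -> (0 < n)%N -> (- Q) ^+ n - 1 != 0.
Proof.
move=> hQ hn; apply/negP => /eqP h.
have : `|(- Q) ^+ n| = 1 by rewrite (_ : (- Q) ^+ n = 1) ?normr1 //; lra.
rewrite normbX; last lra.
have := pow_ge Q 1 n hQ hn; rewrite expr1 => *; lra.
Qed.

Lemma gbin_neq0 (Q : rat) m l : 2 <= Q -> (l <= m)%N -> gbin (- Q) m l != 0.
Proof.
move=> hQ hlm; rewrite /gbin prodf_seq_neq0; apply/allP => t.
rewrite mem_index_iota => /andP [h1 h2] /=.
apply: mulf_neq0; first by apply: bX_neq1 => //; lia.
by rewrite invr_neq0 // bX_neq1.
Qed.

Lemma b1_neq1 (Q : rat) : 2 <= Q -> - Q - 1 != 0.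
Proof. by move=> h; have := bX_neq1 Q 1 h (isT : (0 < 1)%N); rewrite expr1. Qed.
Ltac nz := repeat (apply/andP; split); first [ by apply: bX_neq1 | by apply: b1_neq1 ].

Lemma g41 (Q : rat) : 2 <= Q -> gbin (- Q) 4 1 = - ((Q - 1) * (Q^+2 + 1)).
Proof. move=> hQ; rewrite /gbin; do 1!rewrite big_ltn //; rewrite big_geq //=; field; nz. Qed.
Lemma g42 (Q : rat) : 2 <= Q -> gbin (- Q) 4 2 = (Q^+2 + 1) * (Q^+2 - Q + 1).
Proof. move=> hQ; rewrite /gbin; do 2!rewrite big_ltn //; rewrite big_geq //=; field; nz. Qed.
Lemma g43 (Q : rat) : 2 <= Q -> gbin (- Q) 4 3 = - ((Q - 1) * (Q^+2 + 1)).
Proof. move=> hQ; rewrite /gbin; do 3!rewrite big_ltn //; rewrite big_geq //=; field; nz. Qed.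
Lemma g44 (Q : rat) : 2 <= Q -> gbin (- Q) 4 4 = 1.
Proof. move=> hQ; rewrite /gbin; do 4!rewrite big_ltn //; rewrite big_geq //=; field; nz. Qed.
Lemma g31 (Q : rat) : 2 <= Q -> gbin (- Q) 3 1 = Q^+2 - Q + 1.
Proof. move=> hQ; rewrite /gbin; do 1!rewrite big_ltn //; rewrite big_geq //=; field; nz. Qed.
Lemma g32 (Q : rat) : 2 <= Q -> gbin (- Q) 3 2 = Q^+2 - Q + 1.
Proof. move=> hQ; rewrite /gbin; do 2!rewrite big_ltn //; rewrite big_geq //=; field; nz. Qed.
Lemma g33 (Q : rat) : 2 <= Q -> gbin (- Q) 3 3 = 1.
Proof. move=> hQ; rewrite /gbin; do 3!rewrite big_ltn //; rewrite big_geq //=; field; nz. Qed.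
Lemma g0 (b : rat) n : gbin b n 0 = 1.
Proof. by rewrite /gbin big_geq. Qed.
Lemma gbinS (b : rat) m l :
  gbin b m.+1 l * (b ^+ (m.+1 - l) - 1) = gbin b m l * (b ^+ m.+1 - 1).
Proof.
elim: l => [|l IH].
  by rewrite /gbin !big_geq // subn0 !mul1r.
rewrite /gbin big_nat_recr // [in RHS]big_nat_recr //= -/(gbin b m.+1 l) -/(gbin b m l).
rewrite !subSS.
transitivity (gbin b m.+1 l * (b ^+ (m.+1 - l) - 1) * ((b^+(m - l) - 1)/(b^+l.+1 - 1))); first by ring.
rewrite IH; ring.
Qed.

Definition Wt (q d j h : nat) : rat :=
  (-1) ^+ j * (- (q%:R)) ^+ ('C(j - h, 2) + h * d)%N * gbin (- (q%:R)) (d - h) (d - j).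

Lemma Qeig_W q d j i n : (d - i = n)%N -> (n <= j)%N ->
  Qeig q d j i = \sum_(0 <= h < n.+1) Wt q d j h * gbin (- (q%:R)) n h.
Proof.
move=> hd hn; rewrite /Qeig /= hd (minn_idPr hn).
by apply: eq_bigr => h _; rewrite /Wt.
Qed.

Lemma Wt_rec q d j h : (h < j)%N -> (j <= d)%N ->
  Wt q d j h * ((- (q%:R)) ^+ (j - h) - 1) * (- (q%:R)) ^+ (d - j + h + 1)
  = Wt q d j h.+1 * ((- (q%:R)) ^+ (d - h) - 1).
Proof.
move=> hj jd; rewrite /Wt.
have hm : (d - h.+1).+1 = (d - h)%N by lia.
have hl : ((d - h.+1).+1 - (d - j) = j - h)%N by lia.
have := gbinS (- (q%:R)) (d - h.+1) (d - j); rewrite hl hm => E.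
have he : ('C(j - h, 2) + h * d + (d - j + h + 1) = 'C(j - h.+1, 2) + h.+1 * d)%N.
  have -> : (j - h = (j - h.+1).+1)%N by lia.
  rewrite binS bin1; lia.
rewrite -he !exprD.
have key : forall s A B G1 G2 R P : rat, G1 * R = G2 * P ->
  s * A * G1 * (R * B) = s * (A * B) * G2 * P.
  move=> s A B G1 G2 R P e.
  have -> : s * (A * B) * G2 * P = s * (A * B) * (G2 * P) by ring.
  rewrite -e; ring.
rewrite -mulrA; exact: key.
Qed.

Lemma ratio_bound (Q w w' R P S : rat) (k : nat) : 2 <= Q ->
  w * (R - 1) * S = w' * (P - 1) -> `|S| * `|R| = `|P| * Q ^+ k ->
  8 <= `|P| -> 4 <= `|R| -> Q ^+ k * `|w| <= 3/2 * `|w'|.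
Proof.
move=> hQ E N hP hR.
have := congr1 Num.norm E; rewrite !normrM => E'.
have a := lerB_dist R 1; have c := ler_normB P 1.
rewrite normr1 in a c.
have hw := normr_ge0 w; have hw' := normr_ge0 w'; have hS := normr_ge0 S.
have h1 : `|w| * (3/4 * `|R|) * `|S| <= `|w| * `|R - 1| * `|S|.
  apply: ler_wpM2r => //; apply: ler_wpM2l => //; lra.
have h2 : `|w'| * `|P - 1| <= `|w'| * (9/8 * `|P|).
  apply: ler_wpM2l => //; lra.
have h3 : `|w| * (3/4 * `|R|) * `|S| = 3/4 * `|w| * (`|S| * `|R|) by ring.
rewrite N in h3.
nra.
Qed.
Lemma poly_pos (Q : rat) : 2 <= Q ->
  3/2 * Q^+7 * (Q^+2-Q+1) + 9/4 * (Q^+2-Q+1) * (Q^+2+2) * Q^+3 + 27/8 * Q^+4 + 81/8 < Q^+10.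
Proof.
move=> hQ.
have ht : 0 <= Q - 2 by lra.
set t := Q - 2 in ht.
have -> : Q = t + 2 by rewrite /t; ring.
have h2 : 0 <= t^+2 by rewrite exprn_ge0.
have h3 : 0 <= t^+3 by rewrite exprn_ge0.
have h4 : 0 <= t^+4 by rewrite exprn_ge0.
have h5 : 0 <= t^+5 by rewrite exprn_ge0.
have h6 : 0 <= t^+6 by rewrite exprn_ge0.
have h7 : 0 <= t^+7 by rewrite exprn_ge0.
have h8 : 0 <= t^+8 by rewrite exprn_ge0.
have h9 : 0 <= t^+9 by rewrite exprn_ge0.
have h10 : 0 <= t^+10 by rewrite exprn_ge0.
lra.
Qed.
Lemma final (Q w0 w1 w2 w3 w4 : rat) : 2 <= Q ->
  0 <= w0 -> 0 <= w1 -> 0 <= w2 -> 0 <= w3 -> 0 < w4 ->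
  Q^+1 * w0 <= 3/2 * w1 -> Q^+2 * w1 <= 3/2 * w2 -> Q^+3 * w2 <= 3/2 * w3 ->
  Q^+4 * w3 <= 3/2 * w4 ->
  w0 + ((Q^+2-Q+1) * w1 + ((Q^+2-Q+1) * w2 + w3)) <
  w4 - (w0 + ((Q-1)*(Q^+2+1) * w1 + ((Q^+2+1)*(Q^+2-Q+1) * w2 + (Q-1)*(Q^+2+1) * w3))).
Proof.
move=> hQ h0 h1 h2 h3 h4 r0 r1 r2 r3.
have Qp : 0 <= Q by lra.
have v2 : Q^+7 * w2 <= 9/4 * w4.
  have := ler_wpM2l (exprn_ge0 4 Qp) r2.
  have -> : Q^+7 * w2 = Q^+4 * (Q^+3 * w2) by ring.
  lra.
have v1 : Q^+9 * w1 <= 27/8 * w4.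
  have := ler_wpM2l (exprn_ge0 7 Qp) r1.
  have -> : Q^+9 * w1 = Q^+7 * (Q^+2 * w1) by ring.
  lra.
have v0 : Q^+10 * w0 <= 81/16 * w4.
  have := ler_wpM2l (exprn_ge0 9 Qp) r0.
  have -> : Q^+10 * w0 = Q^+9 * (Q^+1 * w0) by ring.
  lra.
have ha : 0 <= Q^+2 - Q + 1 by nra.
have k3 := ler_wpM2l (mulr_ge0 (exprn_ge0 7 Qp) ha) r3.
have k2 := ler_wpM2l (mulr_ge0 (mulr_ge0 ha (addr_ge0 (exprn_ge0 2 Qp) (ler0n _ 2))) (exprn_ge0 3 Qp)) v2.
have k1 := ler_wpM2l (exprn_ge0 4 Qp) v1.
have P := poly_pos Q hQ.
have Q10 : 0 < Q^+10 by apply: exprn_gt0; lra.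
rewrite -subr_gt0.
have -> : w4 - (w0 + ((Q - 1) * (Q ^+ 2 + 1) * w1 + ((Q ^+ 2 + 1) * (Q ^+ 2 - Q + 1) * w2 + (Q - 1) * (Q ^+ 2 + 1) * w3))) -
(w0 + ((Q ^+ 2 - Q + 1) * w1 + ((Q ^+ 2 - Q + 1) * w2 + w3))) =
 (Q^+10 * w4 - (2 * (Q^+10 * w0) + Q^+4 * (Q^+9 * w1) + ((Q^+2-Q+1)*(Q^+2+2)*Q^+3) * (Q^+7 * w2) + (Q^+7 * (Q^+2-Q+1)) * (Q^+4 * w3))) / Q^+10.
  by field; apply/negP => /eqP hh; lra.
apply: divr_gt0 => //.
have Pw : (3/2 * Q^+7 * (Q^+2-Q+1) + 9/4 * (Q^+2-Q+1) * (Q^+2+2) * Q^+3 + 27/8 * Q^+4 + 81/8) * w4 < Q^+10 * w4 by rewrite ltr_pM2r.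
lra.
Qed.

Lemma norm4 (x0 x1 x2 x3 : rat) :
  `|x0 + (x1 + (x2 + x3))| <= `|x0| + (`|x1| + (`|x2| + `|x3|)).
Proof.
apply: (le_trans (ler_normD _ _)); rewrite lerD2l.
apply: (le_trans (ler_normD _ _)); rewrite lerD2l.
exact: ler_normD.
Qed.

Lemma Wt_bound q d j h : (2 <= q)%N -> (h < 4)%N -> (6 <= d)%N -> (5 <= j)%N -> (j <= d)%N ->
  (q%:R : rat) ^+ h.+1 * `|Wt q d j h| <= 3/2 * `|Wt q d j h.+1|.
Proof.
move=> hq hh hd hj hjd.
have hQ : 2 <= (q%:R : rat) by rewrite (ler_nat _ 2 q).
have Q0 : 0 <= (q%:R : rat) by lra.
apply: (@ratio_bound _ _ _ _ _ _ _ hQ (@Wt_rec q d j h _ hjd)); first lia.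
- rewrite !normbX // -!exprD; congr (_ ^+ _); lia.
- rewrite normbX //; have := pow_ge (q%:R) 3 (d - h) hQ; rewrite -/(_ <= _)%N.
  move=> H; have := H ltac:(lia); lra.
- rewrite normbX //; have := pow_ge (q%:R) 2 (j - h) hQ.
  move=> H; have := H ltac:(lia); lra.
Qed.

Theorem lemma5p9 (q d j : nat) :
  (exists p k : nat, [/\ prime p, (0 < k)%N & q = (p ^ k)%N]) ->
  (2 <= q)%N -> (6 <= d)%N -> (5 <= j)%N -> (j <= d)%N ->
  `|Qeig q d j (d - 3)| < `|Qeig q d j (d - 4)|.
Proof.
move=> _ hq hd hj hjd.
have hQ : 2 <= (q%:R : rat) by rewrite (ler_nat _ 2 q).
have Q0 : 0 <= (q%:R : rat) by lra.
rewrite (@Qeig_W q d j (d - 3) 3) ?(@Qeig_W q d j (d - 4) 4); try lia.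
rewrite sum4 sum5 (g41 _ hQ) (g42 _ hQ) (g43 _ hQ) (g44 _ hQ) (g31 _ hQ) (g32 _ hQ) (g33 _ hQ) !g0.
have B0 := Wt_bound q d j 0 hq isT hd hj hjd.
have B1 := Wt_bound q d j 1 hq isT hd hj hjd.
have B2 := Wt_bound q d j 2 hq isT hd hj hjd.
have B3 := Wt_bound q d j 3 hq isT hd hj hjd.
set Q := (q%:R : rat) in hQ Q0 B0 B1 B2 B3 *.
set W0 := Wt q d j 0 in B0 *.
set W1 := Wt q d j 1 in B0 B1 *.
set W2 := Wt q d j 2 in B1 B2 *.
set W3 := Wt q d j 3 in B2 B3 *.
have W4p : 0 < `|Wt q d j 4|.
  rewrite normr_gt0 /Wt; apply: mulf_neq0; first apply: mulf_neq0.
  - by rewrite expf_neq0 // oppr_eq0 oner_eq0.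
  - rewrite expf_neq0 // oppr_eq0; apply/negP => /eqP hh; lra.
  - apply: gbin_neq0 => //; lia.
set W4 := Wt q d j 4 in B3 W4p *.
clearbody W0 W1 W2 W3 W4.
have ha : 0 <= Q^+2 - Q + 1 by nra.
have he : 0 <= (Q - 1) * (Q^+2 + 1) by nra.
have hf : 0 <= (Q^+2 + 1) * (Q^+2 - Q + 1) by nra.
have F := @final _ _ _ _ _ _ hQ (normr_ge0 W0) (normr_ge0 W1) (normr_ge0 W2) (normr_ge0 W3) W4p B0 B1 B2 B3.
have U := norm4 (W0 * 1) (W1 * (Q^+2 - Q + 1)) (W2 * (Q^+2 - Q + 1)) (W3 * 1).
rewrite !normrM normr1 (ger0_norm ha) in U.
have L1 := norm4 (W0 * 1) (W1 * - ((Q - 1) * (Q^+2 + 1))) (W2 * ((Q^+2 + 1) * (Q^+2 - Q + 1))) (W3 * - ((Q - 1) * (Q^+2 + 1))).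
have hQ1 : 0 <= Q - 1 by lra.
have hQ2 : 0 <= Q^+2 + 1 by nra.
rewrite !normrM normr1 !normrN !normrM (ger0_norm hQ1) (ger0_norm hQ2) (ger0_norm ha) in L1.
have L2 := lerB_normD (W4 * 1) (W0 * 1 + (W1 * - ((Q - 1) * (Q^+2 + 1)) + (W2 * ((Q^+2 + 1) * (Q^+2 - Q + 1)) + W3 * - ((Q - 1) * (Q^+2 + 1))))).
rewrite normrM normr1 in L2.
have -> : W0 * 1 + (W1 * - ((Q - 1) * (Q ^+ 2 + 1)) + (W2 * ((Q ^+ 2 + 1) * (Q ^+ 2 - Q + 1)) + (W3 * - ((Q - 1) * (Q ^+ 2 + 1)) + W4 * 1)))
  = W4 * 1 + (W0 * 1 + (W1 * - ((Q - 1) * (Q^+2 + 1)) + (W2 * ((Q^+2 + 1) * (Q^+2 - Q + 1)) + W3 * - ((Q - 1) * (Q^+2 + 1))))) by ring.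
lra.
Qed.
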